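(* Let $\gamma=000\cdots\in\Omega$ be the all-zero sequence and $B=\Omega\setminus\{\gamma\}$. Then $B\in\mathcal{B}_{\mathcal{U}}$ and $\widehat{\mu}(B)=1$.
   Context: For $n\ge1$, $\Omega_n$ is the set of strings $\alpha_0\alpha_1\cdots\alpha_n$ with $\alpha_k\in\{0,1\}$, $\alpha_0=0$. For $\omega=\alpha_0\cdots\alpha_n$, $\omega'=\alpha'_0\cdots\alpha'_n\in\Omega_n$ let $D^n(\omega,\omega')=2^{-n}\prod_{k=1}^n i^{|\alpha_k-\alpha_{k-1}|}\prod_{k=1}^n i^{-|\alpha'_k-\alpha'_{k-1}|}\,\delta_{\alpha_n\alpha'_n}$ ($i=\sqrt{-1}$) and for $A\subseteq\Omega_n$, $\mu_n(A)=\sum_{\omega,\omega'\in A}D^n(\omega,\omega')$. $\Omega$ is the set of infinite sequences $\alpha_0\alpha_1\cdots$ with $\alpha_k\in\{0,1\}$, $\alpha_0=0$. A cylinder set is a set $\{\alpha_0\alpha_1\cdots\in\Omega:\alpha_0\cdots\alpha_n\in E\}$ with $E\subseteq\Omega_n$; its measure is $\mu(\cdot)=\mu_n(E)$ (well defined). For $A\subseteq\Omega$ and $n\ge0$, $A^{(n)}=\{\omega\in\Omega:\text{some }\omega'\in A\text{ has the same first }n+1\text{ entries as }\omega\}$ (a cylinder set). $A$ is an upper set if $A=\bigcup_n\big(\Omega\setminus(\Omega\setminus A)^{(n)}\big)$; $\mathcal{U}$ is the collection of upper sets; $\mathcal{B}_{\mathcal{U}}=\{A\in\mathcal{U}:\lim_{n\to\infty}\mu\big(\Omega\setminus(\Omega\setminus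 A)^{(n)}\big)\text{ exists}\}$, and for $A\in\mathcal{B}_{\mathcal{U}}$, $\widehat{\mu}(A)=\lim_{n\to\infty}\mu\big(\Omega\setminus(\Omega\setminus A)^{(n)}\big)$. *)

(* Defs.v *)
From mathcomp Require Import all_boot all_order all_algebra.
From mathcomp Require Import boolp classical_sets reals.
From mathcomp.real_closed Require Import complex.
Set Implicit Arguments. Unset Strict Implicit. Unset Printing Implicit Defensive.
Import GRing.Theory Num.Theory.
Local Open Scope ring_scope.
Local Open Scope classical_set_scope.

(* Infinite sequences alpha_0 alpha_1 ... are functions nat -> bool
   (false = 0, true = 1); Omega is the set of those with alpha_0 = 0. *)
Definition Omega : set (nat -> bool) := [set a | a 0%N = false].

(* Strings alpha_0 ... alpha_n : finite functions on {0..n}.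
   Omega_n = those with alpha_0 = 0. *)
Definition str (n : nat) := {ffun 'I_n.+1 -> bool}.
Definition in_Omega_n (n : nat) (w : str n) : bool := w ord0 == false.

(* D^n(w,w') = 2^{-n} prod_{k=1}^n i^{|a_k - a_{k-1}|}
                      prod_{k=1}^n i^{-|a'_k - a'_{k-1}|} delta_{a_n a'_n};
   for bits, |a_k - a_{k-1}| = (a_k != a_{k-1}). *)
Definition Dn (R : realType) (n : nat) (w w' : str n) : R[i] :=
  (2%:R ^- n) *
  (\prod_(1 <= k < n.+1) ('i : R[i]) ^+ (w (inord k) != w (inord k.-1))) *
  (\prod_(1 <= k < n.+1) ('i : R[i]) ^- (w' (inord k) != w' (inord k.-1))) *
  ((w ord_max == w' ord_max)%:R).

Definition mu_n (R : realType) (n : nat) (E : pred (str n)) : R[i] :=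
  \sum_(w | E w && in_Omega_n w) \sum_(w' | E w' && in_Omega_n w') Dn R w w'.

Definition prefix (n : nat) (a : nat -> bool) : str n := [ffun k => a (val k)].

(* The measure of a cylinder set C determined by the first n+1 entries:
   C = {a in Omega : prefix n a in E} with E the set of prefixes of C. *)
Definition mu_cyl (R : realType) (n : nat) (C : set (nat -> bool)) : R[i] :=
  mu_n R (fun w => `[< exists2 a, C a & prefix n a = w >]).

Definition cyl (A : set (nat -> bool)) (n : nat) : set (nat -> bool) :=
  [set w | Omega w /\ exists2 w', A w' & forall k, (k <= n)%N -> w k = w' k].

Definition inner (A : set (nat -> bool)) (n : nat) : set (nat -> bool) :=
  Omega `\` cyl (Omega `\` A) n.

Definition upper_set (A : set (nat -> bool)) : Prop :=
  A = \bigcup_n inner A n.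

Definition cvgC (R : realType) (u : nat -> R[i]) (L : R[i]) : Prop :=
  forall e : R[i], 0 < e -> exists N : nat, forall n, (N <= n)%N -> `|u n - L| < e.

Definition in_BU (R : realType) (A : set (nat -> bool)) : Prop :=
  upper_set A /\ exists L : R[i], cvgC (fun n => mu_cyl R n (inner A n)) L.

(* muhat(A) = L, for A in B_U (the limit is unique) *)
Definition muhat_eq (R : realType) (A : set (nat -> bool)) (L : R[i]) : Prop :=
  cvgC (fun n => mu_cyl R n (inner A n)) L.

Definition gamma : nat -> bool := fun _ => false.
Definition Bset : set (nat -> bool) := Omega `\` [set gamma].

Arguments in_BU R A : clear implicits.
Arguments muhat_eq R A L : clear implicits.

(* Main.v *)
Require Import Defs.
From mathcomp Require Import all_boot all_order all_algebra.
From mathcomp Require Import boolp classical_sets reals.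
From mathcomp.real_closed Require Import complex.
From mathcomp Require Import ring lra.
Import Order.TTheory GRing.Theory Num.Theory.
Local Open Scope ring_scope.
Local Open Scope complex_scope.
Set Implicit Arguments. Unset Strict Implicit.
Section S.
Variable R : realType.
Definition Fz (z : R[i]) n (w : str n) : R[i] :=
  \prod_(1 <= k < n.+1) z ^+ (w (inord k) != w (inord k.-1)).
Definition Vz (z : R[i]) n (b : bool) : R[i] :=
  \sum_(w : str n | (w ord0 == false) && (w ord_max == b)) Fz z w.
Definition ext n (p : str n * bool) : str n.+1 :=
  [ffun k : 'I_n.+2 => if (val k <= n)%N then p.1 (inord k) else p.2].
Definition unext n (w : str n.+1) : str n * bool :=
  ([ffun k : 'I_n.+1 => w (inord k)], w ord_max).

Lemma extK n : cancel (@ext n) (@unext n).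
Proof.
case=> u c; rewrite /unext /ext; congr pair; last by rewrite ffunE /= ltnn.
apply/ffunP=> k; rewrite !ffunE /= inordK; last by rewrite ltnS ltnW.
by rewrite -ltnS ltn_ord /= inord_val.
Qed.

Lemma unextK n : cancel (@unext n) (@ext n).
Proof.
move=> w; apply/ffunP=> k; rewrite /unext /ext !ffunE /=.
case: ifP=> hk.
  congr (w _); apply/val_inj => /=.
  have h1 : (inord k : 'I_n.+1) = k :> nat by rewrite inordK.
  by rewrite inordK h1 // ltnS ltnW.
have -> : k = ord_max; last by [].
apply/val_inj => /=; move: (ltn_ord k) hk; rewrite ltnS leq_eqVlt => /orP[/eqP//|].
by rewrite ltnS => ->.
Qed.

Lemma ext_low n u c j : (j <= n)%N -> @ext n (u, c) (inord j) = u (inord j).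
Proof.
move=> hj; rewrite /ext ffunE /= inordK; last by rewrite ltnS ltnW.
by rewrite hj.
Qed.

Lemma ext_top n u c : @ext n (u, c) (inord n.+1) = c.
Proof. by rewrite /ext ffunE /= inordK // ltnn. Qed.

Lemma Fz_ext z n u c : Fz z (@ext n (u, c)) = Fz z u * z ^+ (c != u ord_max).
Proof.
rewrite /Fz big_nat_recr //=; congr (_ * _).
  apply: eq_big_nat => k /andP[k1 kn].
  have h1 : (k <= n)%N by rewrite -ltnS.
  have h2 : (k.-1 <= n)%N by apply: leq_trans (leq_pred k) _.
  by rewrite !ext_low.
rewrite ext_top ext_low //.
by have -> : (inord n : 'I_n.+1) = ord_max by apply/val_inj; rewrite /= inordK.
Qed.

Lemma Vz_rec z n b : Vz z n.+1 b = Vz z n b + z * Vz z n (~~ b).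
Proof.
rewrite /Vz (reindex (@ext n)); last by exists (@unext n) => x _; [apply: extK|apply: unextK].
rewrite (eq_big (fun j : str n * bool => (j.1 ord0 == false) && (j.2 == b))
   (fun j => Fz z j.1 * z ^+ (j.2 != j.1 ord_max))); last first.
- by case=> u c _; rewrite Fz_ext.
- case=> u c /=.
  have -> : (ord0 : 'I_n.+2) = inord 0 by apply/val_inj; rewrite /= inordK.
  have -> : (ord_max : 'I_n.+2) = inord n.+1 by apply/val_inj; rewrite /= inordK.
  rewrite ext_low // ext_top.
  by have -> : (inord 0 : 'I_n.+1) = ord0 by apply/val_inj; rewrite /= inordK.
rewrite -(pair_big (fun u : str n => u ord0 == false) (fun c => c == b)
   (fun u c => Fz z u * z ^+ (c != u ord_max))) /=.
under eq_bigr => u _ do rewrite (big_pred1 b) //.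
rewrite (bigID (fun u : str n => u ord_max == b)) /=.
rewrite big_distrr /=; congr (_ + _).
  apply: eq_big => // u.
  by move=> /andP[_ /eqP ->]; rewrite eqxx expr0 mulr1.
apply: eq_big => u.
  by congr (_ && _); case: b; case: (u ord_max).
by move=> /andP[_]; case: b; case: (u ord_max) => //= _; rewrite expr1 mulrC.
Qed.

Fixpoint cs (n : nat) : R * R :=
  if n is m.+1 then ((cs m).1 - (cs m).2, (cs m).2 + (cs m).1) else (1, 0).

Lemma cs_norm n : (cs n).1 ^+ 2 + (cs n).2 ^+ 2 = 2%:R ^+ n.
Proof.
elim: n => [|n IH] /=; first by rewrite expr1n expr0n /= addr0.
rewrite [in RHS]exprS -IH; set c := (cs n).1; set e := (cs n).2.
ring.
Qed.

Definition zero_str n : str n := [ffun => false].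

Lemma Fz_zero z n : Fz z (zero_str n) = 1.
Proof. by rewrite /Fz big1 // => k _; rewrite !ffunE. Qed.

Lemma Vz0 z b : Vz z 0 b = (b == false)%:R.
Proof.
have om : (ord_max : 'I_1) = ord0 by apply/val_inj.
rewrite /Vz om; case: b => /=.
  by rewrite big_pred0 // => w; case: (w ord0).
rewrite (big_pred1 (zero_str 0)) ?Fz_zero // => w /=.
rewrite andbb; apply/eqP/eqP => [h|->]; last by rewrite ffunE.
by apply/ffunP => k; rewrite ffunE (ord1 k).
Qed.

Lemma Vz_closed z n : z ^+ 2 = -1 ->
  Vz z n false = (cs n).1%:C /\ Vz z n true = z * (cs n).2%:C.
Proof.
move=> hz; elim: n => [|n [IH1 IH2]].
  by rewrite !Vz0 /= mulr0.
rewrite !Vz_rec /= IH1 IH2 !rmorphD !rmorphN /=; split.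
  by rewrite mulrA -expr2 hz mulN1r.
by rewrite mulrDr addrC.
Qed.

Lemma E_char n (w : str n) :
  (`[< exists2 a, inner Bset n a & Defs.prefix n a = w >] && in_Omega_n w) =
  (w ord0 == false) && (w != zero_str n).
Proof.
apply/idP/idP.
  case/andP => /asboolP [a [Oa ncyl] <-] _.
  rewrite /Defs.prefix ffunE /= Oa eqxx /=; apply/eqP => h.
  apply: ncyl; split => //; exists gamma.
    by split => //; case => _; apply.
  move=> k kn; have := congr1 (fun f : str n => f (inord k)) h.
  by rewrite !ffunE /= inordK.
case/andP => /eqP w0 nz; rewrite /in_Omega_n w0 eqxx andbT.
apply/asboolP; exists (fun k => if (k <= n)%N then w (inord k) else false); last first.
  by apply/ffunP => k; rewrite ffunE -ltnS ltn_ord inord_val.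
split.
  rewrite /Omega /=.
  by have -> : (inord 0 : 'I_n.+1) = ord0 by apply/val_inj; rewrite /= inordK.
case=> _ [w' [Ow' nB] agree].
have g : w' = gamma.
  apply: contrapT => hne; apply: nB; split => //.
move/eqP: nz; apply; apply/ffunP => k; rewrite ffunE.
have := agree k; rewrite -ltnS ltn_ord inord_val g => -> //.
Qed.

Definition SS z n (P : pred (str n)) b : R[i] :=
  \sum_(w | (P w && in_Omega_n w) && (w ord_max == b)) Fz z w.

Lemma mu_split n (P : pred (str n)) :
  mu_n R P = 2%:R ^- n * (SS 'i P true * SS 'i^-1 P true + SS 'i P false * SS 'i^-1 P false).
Proof.
have eD : forall w w' : str n, Dn R w w' =
    2%:R ^- n * (Fz 'i w * (Fz 'i^-1 w' * (w ord_max == w' ord_max)%:R)).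
  move=> w w'; rewrite /Dn /Fz.
  rewrite !mulrA; congr (_ * _ * _); apply: eq_bigr => k _.
  by rewrite exprVn.
rewrite /mu_n.
under eq_bigr => w _ do under eq_bigr => w' _ do rewrite eD.
under eq_bigr => w _ do rewrite -big_distrr -big_distrr /=.
rewrite -big_distrr /=; congr (_ * _).
have eS : forall w : str n, \sum_(w' | P w' && in_Omega_n w')
    Fz 'i^-1 w' * (w ord_max == w' ord_max)%:R = SS 'i^-1 P (w ord_max).
  move=> w; rewrite /SS [RHS]big_mkcondr /=; apply: eq_bigr => w' _.
  by rewrite eq_sym; case: eqP => _; rewrite ?mulr1 ?mulr0.
under eq_bigr => w _ do rewrite eS.
rewrite (partition_big (fun w : str n => w ord_max) xpredT) // big_bool /=.
rewrite /SS !big_distrl /=; congr (_ + _); apply: eq_bigr => w /andP[_ /eqP ->] //.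
Qed.

Definition Ep n : pred (str n) :=
  fun w => `[< exists2 a, inner Bset n a & Defs.prefix n a = w >].

Arguments Ep : clear implicits.

Lemma SS_true z n : SS z (Ep n) true = Vz z n true.
Proof.
rewrite /SS /Vz; apply: eq_bigl => w; rewrite E_char.
case hm: (w ord_max); rewrite ?andbF ?andbT //.
case: (w ord0 == false) => //=; apply/eqP => h.
by rewrite h ffunE in hm.
Qed.

Lemma SS_false z n : SS z (Ep n) false = Vz z n false - 1.
Proof.
rewrite /Vz (bigD1 (zero_str n)) /=; last by rewrite !ffunE.
rewrite Fz_zero addrC addrK /SS; apply: eq_bigl => w; rewrite E_char.
by rewrite -!andbA; congr (_ && _); rewrite andbC.
Qed.

Lemma i_neq0 : ('i : R[i]) != 0.
Proof.
apply/eqP => h; have := sqr_i R; rewrite h expr0n /= => /eqP.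
by rewrite eq_sym oppr_eq0 oner_eq0.
Qed.

Lemma mu_val n : mu_cyl R n (inner Bset n) =
  ((2%:R ^- n * (((cs n).2)^+2 + ((cs n).1 - 1)^+2)) : R)%:C.
Proof.
rewrite /mu_cyl (mu_split (Ep n)) !SS_true !SS_false.
have [a1 a2] := Vz_closed n (sqr_i R).
have [b1 b2] : Vz 'i^-1 n false = (cs n).1%:C /\ Vz 'i^-1 n true = 'i^-1 * (cs n).2%:C.
  by apply: Vz_closed; rewrite exprVn sqr_i invrN1.
rewrite a1 a2 b1 b2 rmorphM fmorphV rmorphXn rmorph_nat rmorphD !rmorphXn rmorphB rmorph1.
congr (_ * _); rewrite mulrACA mulfV ?i_neq0 // mul1r !expr2 //.
Qed.
Lemma real_bound (c e P y : R) : c^+2 + e^+2 = P -> 1 <= P ->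
  y = P^-1 * (e^+2 + (c-1)^+2) - 1 -> y^+2 * P <= 10%:R.
Proof.
move=> hP P1 hy.
have P0 : P != 0 by apply/eqP => h; rewrite h in P1; lra.
have yP : y * P = 1 - 2%:R * c.
  rewrite hy mulrBl mul1r mulrAC mulVf // mul1r -hP; ring.
have h1 : (y * P)^+2 <= 10%:R * P.
  rewrite yP; have : 0 <= (1 + 2%:R * c)^+2 by apply: sqr_ge0.
  have : 0 <= e^+2 by apply: sqr_ge0.
  rewrite -hP; nra.
have Pp : 0 < P by lra.
rewrite -(ler_pM2r Pp); apply: le_trans h1; rewrite le_eqVlt; apply/orP; left; apply/eqP; ring.
Qed.

Lemma small_sq (y r : R) : 0 < r -> y^+2 < r^+2 -> `|y| < r.
Proof.
move=> r0 h; rewrite -(real_normK (num_real y)) in h.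
have n0 := normr_ge0 y.
rewrite ltNge; apply/negP => hr; move: h; apply/negP; rewrite -leNgt.
nra.
Qed.

Lemma conv_real (r : R) : 0 < r -> exists N : nat, forall n, (N <= n)%N ->
  `|2%:R ^- n * (((cs n).2)^+2 + ((cs n).1 - 1)^+2) - 1| < r.
Proof.
move=> r0; exists (Num.Def.archi_bound (10%:R / r^+2)) => n hn.
have hb := @archi_boundP _ (10%:R / r^+2) (divr_ge0 (ler0n _ _) (sqr_ge0 r)).
set y := _ - 1.
have P1 : (1 : R) <= 2%:R ^+ n by rewrite -natrX ler1n expn_gt0.
have hy := real_bound (cs_norm n) P1 (erefl y).
have nP : (n%:R : R) <= 2%:R ^+ n.
  by rewrite -natrX ler_nat ltnW // ltn_expl.
have Nn : ((Num.Def.archi_bound (10%:R / r ^+ 2))%:R : R) <= n%:R by rewrite ler_nat.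
have r2 : 0 < r^+2 by rewrite exprn_gt0.
have h10 : 10%:R < r^+2 * 2%:R ^+ n.
  rewrite -ltr_pdivrMl //; rewrite mulrC; apply: lt_le_trans hb _.
  exact: le_trans Nn nP.
apply: small_sq => //.
have Pp : (0 : R) < 2%:R ^+ n by lra.
rewrite -(ltr_pM2r Pp); exact: le_lt_trans hy h10.
Qed.

Lemma upper_B : upper_set Bset.
Proof.
apply/seteqP; split => a.
  case=> Oa ng.
  have [k ak] : exists k, a k = true.
    apply: contrapT => hn; apply: ng; apply/funext => k /=.
    by case hk: (a k) => //; exfalso; apply: hn; exists k.
  exists k => //; split => //; case=> _ [w' [Ow' nB] agree].
  have g : w' = gamma by apply: contrapT => hne; apply: nB.
  by move: (agree k (leqnn k)); rewrite ak g.
case=> n _ [Oa ncyl]; split => // ag; apply: ncyl; split => //.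
exists gamma; first by split => //; case => _; apply.
by move=> k _; rewrite ag.
Qed.

Lemma conv_B : muhat_eq R Bset 1.
Proof.
move=> e; rewrite ltcE => /andP[/eqP ImE Re0].
have [N hN] := conv_real Re0.
exists N => n hn; rewrite mu_val.
set y := (_ * _)%R.
have -> : y%:C - 1 = (y - 1)%:C by rewrite rmorphB rmorph1.
rewrite normc_def /= expr0n /= addr0 sqrtr_sqr ltcE /=.
by rewrite ImE eqxx /= hN.
Qed.

End S.

Theorem theorem4p6 (R : realType) : in_BU R Bset /\ muhat_eq R Bset 1.
Proof.
split; last exact: conv_B.
split; first exact: upper_B.
by exists 1; exact: conv_B.
Qed.
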